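(* Let $q$ be a prime power, $n\ge2$, and $s$ an odd positive integer with $\gcd(s,n)=1$. If $n$ and $d$ have opposite parity and $1\le d\le n-1$, then the code $$\mathcal{H}_{n,d,s}=\Big\{\sum_{j=1}^{\frac{n-d+1}{2}}\Big((b_jx)^{q^{2s(n-j+1)}}+b_j^{q^s}x^{q^{2sj}}\Big): b_1,\dots,b_{\frac{n-d+1}{2}}\in\mathbb{F}_{q^{2n}}\Big\}$$ is an $(n-d+1)$-design. If $n$ and $d$ are both odd with $1\le d\le n-1$, then the code $$\mathcal{E}_{n,d,s}=\Big\{(b_0x)^{q^{s(n+1)}}+\sum_{j=1}^{\frac{n-d}{2}}\Big((b_jx)^{q^{s(n+2j+1)}}+b_j^{q^s}x^{q^{s(n-2j+1)}}\Big): b_0\in\mathbb{F}_{q^n},\ b_1,\dots,b_{\frac{n-d}{2}}\in\mathbb{F}_{q^{2n}}\Big\}$$ is an $(n-d+1)$-design.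
   Context: Polynomials are $\mathbb{F}_{q^2}$-linearized polynomials over $\mathbb{F}_{q^{2n}}$ taken modulo $x^{q^{2n}}-x$, i.e. elements of $\mathcal{L}_{n,q^2}=\{\sum_{i=0}^{n-1}a_ix^{q^{2i}}:a_i\in\mathbb{F}_{q^{2n}}\}$, viewed as $\mathbb{F}_{q^2}$-linear maps $\mathbb{F}_{q^{2n}}\to\mathbb{F}_{q^{2n}}$; the rank of $f$ is $\dim_{\mathbb{F}_{q^2}}$ of its image. The paper models Hermitian forms of order $n$ over $\mathbb{F}_{q^2}$ by the set $\mathcal{H}_n(q^2)=\{\sum_{i=0}^{n-1}c_ix^{q^{2i}}: c_{n-i+1}=c_i^{q^{2n-2i+1}},\ i\in\{0,\dots,n-1\}\}$ (indices modulo $n$), which is $\mathbb{F}_q$-linearly and rank-preservingly identified with the set $\mathrm{H}_n(q^2)$ of Hermitian $n\times n$ matrices over $\mathbb{F}_{q^2}$. On $\mathcal{H}_n(q^2)$ the pairing is $b(f,g)=\mathrm{Tr}_{q^{2n}/q^2}\big(\sum_{i=0}^{n-1}a_ib_i\big)$ for $f=\sum a_ix^{q^{2i}}$, $g=\sum b_ix^{q^{2i}}$, where $\mathrm{Tr}_{q^{2n}/q^2}(x)=\sum_{i=0}^{n-1}x^{q^{2i}}$; the dual of an additive code $\mathcal{C}$ is $\mathcal{C}^\perp=\{f\in\mathcal{H}_n(q^2): b(f,g)=0\ \forall g\in\mathcal{C}\}$. An additive code $\mathcal{C}$ is a $t$-design if its dual $\mathcal{C}^\perp$ contains no nonzero element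 of rank in $\{1,\dots,t\}$ (equivalently, in the matrix model, the dual inner distribution satisfies $A'_1=\dots=A'_t=0$). The codes $\mathcal{H}_{n,d,s}$ and $\mathcal{E}_{n,d,s}$ are known (Schmidt) to be maximum $\mathbb{F}_q$-linear Hermitian $d$-codes, i.e. of size $q^{n(n-d+1)}$ with all nonzero elements of rank at least $d$. *)

(* Defs.v *)
From HB Require Import structures.
From mathcomp Require Import all_boot all_order all_algebra all_field.
Set Implicit Arguments. Unset Strict Implicit. Unset Printing Implicit Defensive.
Import GRing.Theory.
Local Open Scope ring_scope.

Section Defs.
Variable F : finFieldType.

(* An element of L_{n,q^2} (F = F_{q^{2n}}) is represented by its coefficient
   vector c, standing for  sum_{i<n} c_i x^{q^{2i}}. *)
Definition lpoly (n : nat) := {ffun 'I_n -> F}.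

Definition coef (n : nat) (c : lpoly n) (k : nat) : F :=
  match @insub nat (fun m => m < n)%N 'I_n (k %% n)%N with
  | Some i => c i | None => 0 end.

(* The monomial  c x^{q^e}  (e even) reduced modulo x^{q^{2n}} - x, i.e.
   c x^{q^{2 ((e/2) mod n)}}. *)
Definition lterm (n : nat) (c : F) (e : nat) : lpoly n :=
  [ffun i : 'I_n => if (val i == (e %/ 2) %% n)%N then c else 0].

Definition lev (q n : nat) (c : lpoly n) (x : F) : F :=
  \sum_(i < n) c i * x ^+ (q ^ (2 * i)).

Definition limage (q n : nat) (c : lpoly n) : {set F} :=
  [set lev q c x | x : F].

Definition inFq2 (q : nat) (x : F) : Prop := x ^+ (q ^ 2) = x.

Definition is_basis_over (q r : nat) (S : {set F}) (v : 'I_r -> F) : Prop :=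
  (forall i, v i \in S) /\
  (forall lam : 'I_r -> F, (forall i, inFq2 q (lam i)) ->
      \sum_(i < r) lam i * v i = 0 -> forall i, lam i = 0) /\
  (forall y, y \in S -> exists lam : 'I_r -> F,
      (forall i, inFq2 q (lam i)) /\ y = \sum_(i < r) lam i * v i).

Definition has_rank (q n : nat) (c : lpoly n) (r : nat) : Prop :=
  exists v : 'I_r -> F, is_basis_over q (limage q c) v.

Definition hermitian (q n : nat) (c : lpoly n) : Prop :=
  forall i : 'I_n, coef c (n - i + 1) = c i ^+ (q ^ (2 * n - 2 * i + 1)).

Definition trace2 (q n : nat) (x : F) : F := \sum_(i < n) x ^+ (q ^ (2 * i)).

Definition bpair (q n : nat) (f g : lpoly n) : F :=
  trace2 q n (\sum_(i < n) f i * g i).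

Definition dual (q n : nat) (C : lpoly n -> Prop) (f : lpoly n) : Prop :=
  hermitian q f /\ forall g, C g -> bpair q f g = 0.

Definition t_design (q n : nat) (C : lpoly n -> Prop) (t : nat) : Prop :=
  forall f : lpoly n, dual q C f -> f != 0 ->
    forall r, has_rank q f r -> ~ (1 <= r <= t)%N.

Definition Hcode (q n d s : nat) (f : lpoly n) : Prop :=
  exists b : nat -> F,
    f = \sum_(1 <= j < ((n - d + 1) %/ 2).+1)
          (lterm n (b j ^+ (q ^ (2 * s * (n - j + 1)))) (2 * s * (n - j + 1))
           + lterm n (b j ^+ (q ^ s)) (2 * s * j)).

Definition Ecode (q n d s : nat) (f : lpoly n) : Prop :=
  exists (b0 : F) (b : nat -> F), b0 ^+ (q ^ n) = b0 /\
    f = lterm n (b0 ^+ (q ^ (s * (n + 1)))) (s * (n + 1))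
        + \sum_(1 <= j < ((n - d) %/ 2).+1)
          (lterm n (b j ^+ (q ^ (s * (n + 2 * j + 1)))) (s * (n + 2 * j + 1))
           + lterm n (b j ^+ (q ^ s)) (s * (n - 2 * j + 1))).

End Defs.

Definition prime_power (q : nat) : Prop :=
  exists p k : nat, prime p /\ (0 < k)%N /\ q = (p ^ k)%N.

(* Main.v *)
Require Import Defs.
From HB Require Import structures.
From mathcomp Require Import all_boot all_order all_algebra all_field.
From mathcomp Require Import fingroup perm cyclic.
From mathcomp Require Import zify.
From Stdlib Require Import Lia.
From mathcomp Require Import ring.
Set Implicit Arguments. Unset Strict Implicit. Unset Printing Implicit Defensive.
Import GRing.Theory.
Local Open Scope ring_scope.


Section Gen.
Variable F : finFieldType.

Lemma card_fix_le (m : nat) : (1 < m)%N -> (#|[set x : F | x ^+ m == x]| <= m)%N.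
Proof.
move=> m1.
pose p : {poly F} := 'X^m - 'X.
have szp : size p = m.+1.
  rewrite /p size_polyDl ?size_polyXn // size_polyN size_polyX; lia.
have p0 : p != 0 by rewrite -size_poly_eq0 szp.
have := @max_poly_roots _ p (enum [set x : F | x ^+ m == x]) p0.
rewrite szp cardE ltnS; apply.
  apply/allP=> x; rewrite mem_enum inE /root /p !hornerE => /eqP ->.
  by rewrite subrr.
exact: enum_uniq.
Qed.

Lemma card_preim (L : F -> F) (S : {set F}) :
  (forall x y, L (x - y) = L x - L y) ->
  (#|[set x | L x \in S]| <= #|[set x | L x == 0%R]| * #|S|)%N.
Proof.
move=> LB.
pose r (y : F) : F := odflt (0 : F) [pick z | L z == y].
have rP x : L (r (L x)) = L x.
  rewrite /r; case: pickP => [z /eqP //|/(_ x)]; by rewrite eqxx.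
pose phi x := (x - r (L x), L x).
rewrite -cardsX -(card_in_imset (f := phi)).
  apply: subset_leq_card; apply/subsetP=> w /imsetP[x]; rewrite inE => xS ->.
  by rewrite !inE /= LB rP subrr eqxx.
move=> x y _ _ [] e1 e2.
by move: e1; rewrite e2 => /(congr1 (fun t => t + r (L y))); rewrite !subrK.
Qed.

Variable sig : F -> F.
Hypothesis sigD : forall x y, sig (x + y) = sig x + sig y.
Hypothesis sigM : forall x y, sig (x * y) = sig x * sig y.
Hypothesis sig1 : sig 1 = 1.

Lemma sig0 : sig 0 = 0.
Proof. by apply: (@addrI _ (sig 0)); rewrite addr0 -sigD addr0. Qed.

Lemma sigN x : sig (- x) = - sig x.
Proof. by apply/eqP; rewrite -subr_eq0 opprK -sigD addNr sig0. Qed.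

Lemma sigB x y : sig (x - y) = sig x - sig y.
Proof. by rewrite sigD sigN. Qed.

Lemma itD t x y : iter t sig (x + y) = iter t sig x + iter t sig y.
Proof. by elim: t => //= t ->; rewrite sigD. Qed.
Lemma itM t x y : iter t sig (x * y) = iter t sig x * iter t sig y.
Proof. by elim: t => //= t ->; rewrite sigM. Qed.
Lemma itB t x y : iter t sig (x - y) = iter t sig x - iter t sig y.
Proof. by elim: t => //= t ->; rewrite sigB. Qed.
Lemma it0 t : iter t sig 0 = 0.
Proof. by elim: t => //= t ->; rewrite sig0. Qed.

Definition P (M : nat) (a : nat -> F) (x : F) := \sum_(t < M) a t * iter t sig x.

Lemma div_step (c : F) M : forall a : nat -> F, exists g : nat -> F, exists e : F,
  (forall x, P M.+1 a x = P M g (sig x - c * x) + e * x) /\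
  ((forall t, (t < M)%N -> g t = 0) -> forall t, (0 < t < M.+1)%N -> a t = 0).
Proof.
elim: M => [|M IH] a.
  exists (fun _ => 0), (a 0%N); split.
    by move=> x; rewrite /P big_ord1 big_ord0 add0r.
  by move=> _ t; lia.
pose a' t := if t == M then a M + a M.+1 * iter M sig c else a t.
have [g' [e [H1 H2]]] := IH a'.
exists (fun t => if t == M then a M.+1 else g' t), e; split.
  move=> x.
  have -> : P M.+2 a x = P M.+1 a' x + a M.+1 * iter M sig (sig x - c * x).
    rewrite /P big_ord_recr /= big_ord_recr /= [in RHS]big_ord_recr /=.
    rewrite [X in _ = X + _ + _](eq_bigr (fun i : 'I_M => a i * iter i sig x)); last first.
      by move=> i _; rewrite /a' /= ifN // neq_ltn ltn_ord.
    rewrite /a' eqxx itB itM -iterSr.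
    rewrite mulrDl mulrBr; set u := a M.+1 * _ * _.
    have -> : a M.+1 * (iter M sig c * iter M sig x) = u by rewrite /u mulrA.
    by rewrite iterS; ring.
  rewrite H1 /P [in RHS]big_ord_recr /= eqxx.
  rewrite [X in _ = X + _ + _](eq_bigr (fun i : 'I_M => g' i * iter i sig (sig x - c * x))); last first.
    by move=> i _ /=; rewrite ifN // neq_ltn ltn_ord.
  ring.
move=> g0 t /andP[t0 tM].
have aM1 : a M.+1 = 0 by have := g0 M (ltnSn M); rewrite eqxx.
have g'0 : forall t, (t < M)%N -> g' t = 0.
  by move=> u uM; have := g0 u (ltnW uM); rewrite ifN // neq_ltn uM.
have [->//|tM1] := eqVneq t M.+1.
have tM' : (t < M.+1)%N by move: tM tM1; clear; lia.
have := H2 g'0 t; rewrite t0 tM' /a' => /(_ isT).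
by case: eqP => // ->; rewrite aM1 mul0r addr0.
Qed.


Lemma sig_neq0 v : v != 0 -> sig v != 0.
Proof.
move=> v0; apply/eqP=> sv.
have := sigM v v^-1; rewrite mulfV // sig1 sv mul0r => /eqP; by rewrite oner_eq0.
Qed.

Lemma P0 M g : P M g 0 = 0.
Proof. by rewrite /P big1 // => i _; rewrite it0 mulr0. Qed.

Lemma root_bound (Q : nat) : (#|[set x | sig x == x]| <= Q)%N ->
  forall M (a : nat -> F), (exists2 t, (t < M.+1)%N & a t != 0) ->
  (#|[set x | P M.+1 a x == 0%R]| <= Q ^ M)%N.
Proof.
move=> HQ.
have Q1 : (0 < Q)%N.
  apply: leq_trans HQ; apply/card_gt0P; exists 0; by rewrite inE sig0.
have small : forall M a, (forall x, P M.+1 a x == 0 -> x = 0) ->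
    (#|[set x | P M.+1 a x == 0%R]| <= Q ^ M)%N.
  move=> M a H; apply: (@leq_trans #|[set (0:F)]|).
    by apply: subset_leq_card; apply/subsetP=> x; rewrite !inE => /H ->.
  by rewrite cards1 expn_gt0 Q1.
elim=> [|M IH] a [t tM at0].
  apply: small => x; rewrite /P big_ord1 /= mulf_eq0 => /orP[|/eqP//].
  by move: tM at0; rewrite ltnS leqn0 => /eqP -> /negPf ->.
case: (boolP [exists x, (x != 0) && (P M.+2 a x == 0)]); last first.
  move/existsPn=> H; apply: small => x Px; apply/eqP.
  by have := H x; rewrite Px andbT negbK.
case/existsP=> v /andP[v0 /eqP Pv].
pose c := sig v / v.
have [g [e [H1 H2]]] := div_step c M.+1 a.
have Lv : sig v - c * v = 0 by rewrite /c divfK // subrr.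
have e0 : e = 0.
  by move: Pv; rewrite H1 Lv P0 add0r => /eqP; rewrite mulf_eq0 (negPf v0) orbF => /eqP.
have [gnz|gz] := boolP [exists t : 'I_M.+1, g t != 0]; last first.
  exfalso; move/existsPn: gz => gz.
  have g0 : forall t, (t < M.+1)%N -> g t = 0.
    by move=> u uM; have := gz (Ordinal uM); rewrite negbK => /eqP.
  have az := H2 g0.
  have t0 : t = 0%N.
    case: t tM at0 => // t' tM; rewrite az ?eqxx //.
  move: at0; rewrite t0 => a0.
  move: Pv; rewrite /P big_ord_recl big1 /=; last first.
    by move=> i _; rewrite az ?mul0r //=; rewrite /bump /=; have := ltn_ord i; lia.
  by rewrite addr0 => /eqP; rewrite !mulf_eq0 (negPf a0) (negPf v0).
case/existsP: gnz => t' gt'.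
have IHg := IH g (ex_intro2 _ _ (val t') (ltn_ord t') gt').
pose L x := sig x - c * x.
have -> : [set x | P M.+2 a x == 0] = [set x | L x \in [set y | P M.+1 g y == 0]].
  by apply/setP=> x; rewrite !inE H1 e0 mul0r addr0.
apply: leq_trans (card_preim _ _) _.
  by move=> x y; rewrite /L sigB mulrBr; ring.
rewrite expnS leq_mul //.
apply: leq_trans HQ.
have -> : [set x | L x == 0] = [set x | sig x == c * x].
  by apply/setP=> x; rewrite !inE /L subr_eq0.
rewrite -(card_in_imset (f := fun x => x / v)); last first.
  by move=> x y _ _ /= /(mulIf (invr_neq0 v0)).
apply: subset_leq_card; apply/subsetP=> w /imsetP[x]; rewrite inE => /eqP sx ->.
rewrite inE; apply/eqP.
have sv0 := sig_neq0 v0.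
apply: (mulIf sv0); rewrite -sigM divfK // sx /c; field.
exact: v0.
Qed.

End Gen.


Section Field.
Variables (F : finFieldType) (q n : nat).
Hypotheses (qpp : prime_power q) (n0 : (0 < n)%N) (cardF : #|F| = (q ^ (2 * n))%N).

Lemma q2 : (1 < q)%N.
Proof.
case: qpp => p [k [pp [k0 ->]]].
by rewrite -(expn0 p) ltn_exp2l ?prime_gt1.
Qed.

Lemma frD e (x y : F) : (x + y) ^+ (q ^ e) = x ^+ (q ^ e) + y ^+ (q ^ e).
Proof.
case: qpp => p [k [pp [k0 qE]]].
have pc : p \in [pchar F].
  apply: (@card_finPcharP _ p (k * (2 * n))) => //.
  by rewrite cardF qE -expnM.
apply: exprDn_pchar.
by rewrite qE -expnM pnatX (pnatE _ pp) pc.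
Qed.

Lemma fr0 e : (0 : F) ^+ (q ^ e) = 0.
Proof. by rewrite expr0n expn_eq0; have := q2; case: q => [|[]]. Qed.

Lemma frN e (x : F) : (- x) ^+ (q ^ e) = - x ^+ (q ^ e).
Proof. by apply/eqP; rewrite -subr_eq0 opprK -frD addNr fr0. Qed.

Lemma frB e (x y : F) : (x - y) ^+ (q ^ e) = x ^+ (q ^ e) - y ^+ (q ^ e).
Proof. by rewrite frD frN. Qed.

Lemma frfr e1 e2 (x : F) : (x ^+ (q ^ e1)) ^+ (q ^ e2) = x ^+ (q ^ (e1 + e2)).
Proof. by rewrite -exprM expnD. Qed.

Lemma fix_iter a j (x : F) : x ^+ (q ^ a) = x -> x ^+ (q ^ (a * j)) = x.
Proof.
move=> H; elim: j => [|j IH]; first by rewrite muln0 expn0 expr1.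
by rewrite mulnS -frfr H IH.
Qed.

Lemma fr2n (x : F) : x ^+ (q ^ (2 * n)) = x.
Proof. by rewrite -cardF expf_card. Qed.

Lemma frmod k (x : F) : x ^+ (q ^ (2 * k)) = x ^+ (q ^ (2 * (k %% n))).
Proof.
rewrite {1}(divn_eq k n) mulnDr -frfr; congr (_ ^+ _).
have -> : (2 * (k %/ n * n) = (2 * n) * (k %/ n))%N by ring.
by apply: fix_iter; apply: fr2n.
Qed.

Lemma fr_inj e : injective (fun x : F => x ^+ (q ^ e)).
Proof.
move=> x y /= /eqP; rewrite -subr_eq0 -frB expf_eq0 subr_eq0 => /andP[_ /eqP //].
Qed.

Lemma iter_fr e i (y : F) : iter i (fun y => y ^+ (q ^ e)) y = y ^+ (q ^ (e * i)).
Proof.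
elim: i => [|i IH] /=; first by rewrite muln0 expn0 expr1.
by rewrite IH frfr mulnS addnC.
Qed.


Lemma frM e (x y : F) : (x * y) ^+ (q ^ e) = x ^+ (q ^ e) * y ^+ (q ^ e).
Proof. exact: exprMn. Qed.

Lemma fr1 e : (1 : F) ^+ (q ^ e) = 1.
Proof. exact: expr1n. Qed.

Lemma trD (x y : F) : trace2 q n (x + y) = trace2 q n x + trace2 q n y.
Proof. by rewrite /trace2 -big_split /=; apply: eq_bigr => i _; rewrite frD. Qed.

Lemma trZ (l z : F) : l ^+ (q ^ 2) = l -> trace2 q n (l * z) = l * trace2 q n z.
Proof.
move=> Hl; rewrite /trace2 mulr_sumr; apply: eq_bigr => i _.
by rewrite frM fix_iter.
Qed.

Lemma card_setT_F : #|[set: F]| = (q ^ (2 * n))%N.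
Proof. by rewrite cardsT cardF. Qed.

Lemma tr_zero A (c : F) : (forall b : F, trace2 q n (c * b ^+ (q ^ A)) = 0) -> c = 0.
Proof.
move=> H; apply/eqP; apply/negP => c0.
pose sig := fun y : F => y ^+ (q ^ 2).
pose a := fun i : nat => c ^+ (q ^ (2 * i)).
have a0 : a 0%N = c by rewrite /a muln0 expn0 expr1.
have := @root_bound F sig (fun x y => frD 2 x y) (fun x y => frM 2 x y) (fr1 2)
   (q ^ 2) (card_fix_le _ _) n.-1 a.
have q21 : (1 < q ^ 2)%N by rewrite -(expn0 q) ltn_exp2l ?q2.
move=> /(_ q21).
have -> : [set x | P sig n.-1.+1 a x == 0] = [set: F].
  apply/setP=> y; rewrite !inE.
  have [g gK Kg] := injF_bij (@fr_inj A).
  have := H (g y); rewrite Kg /trace2 /P prednK //.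
  move=> Ht; apply/eqP; rewrite -[in RHS]Ht; apply: eq_bigr => i _.
  by rewrite frM /sig iter_fr.
move=> Hb.
have a0' : a 0%N != 0 by rewrite a0; apply/negP.
have := Hb (ex_intro2 _ _ 0%N (ltn0Sn _) a0').
rewrite card_setT_F -expnM leq_exp2l ?q2 //.
by move: n0; clear; lia.
Qed.

Lemma dvd_sub1 a k : (0 < a)%N -> (a - 1 %| a ^ k - 1)%N.
Proof.
move=> a0; elim: k => [|k IH]; first by rewrite expn0 subnn dvdn0.
have ak : (0 < a ^ k)%N by rewrite expn_gt0 a0.
have -> : (a ^ k.+1 - 1 = a * (a ^ k - 1) + (a - 1))%N.
  rewrite expnS mulnBr muln1; move: ak a0; set b := (a ^ k)%N => ak a0.
  have : (a <= a * b)%N by rewrite -{1}(muln1 a) leq_mul2l ak orbT.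
  lia.
by rewrite dvdn_add // dvdn_mull.
Qed.

Lemma cardF_gt1 : (1 < #|F|)%N.
Proof. by rewrite cardF -(expn0 q) ltn_exp2l ?q2 // muln_gt0 n0. Qed.

Lemma prim_exists : exists z : F, (#|F|.-1).-primitive_root z.
Proof.
have N0 : (0 < #|F|.-1)%N by have := cardF_gt1; case: #|F| => [|[]].
have := @has_prim_root F _ (enum [set~ (0 : F)]) N0.
move=> H.
have H1 : all (#|F|.-1).-unity_root (enum [set~ (0 : F)]).
  apply/allP=> x; rewrite mem_enum in_setC1 => x0.
  rewrite unity_rootE; apply/eqP; apply: (mulfI x0); rewrite -exprS prednK ?expf_card ?mulr1 //.
  by apply: ltnW; apply: cardF_gt1.
have H3 : (#|F|.-1 <= size (enum [set~ (0 : F)%R]))%N by rewrite -cardE cardsC1.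
have [z _ zp] := hasP (H H1 (enum_uniq _) H3).
by exists z.
Qed.

Lemma sub_count m : (q ^ m - 1 %| q ^ (2 * n) - 1)%N ->
  (q ^ m <= #|[set x : F | x ^+ (q ^ m) == x]|)%N.
Proof.
move=> Hd.
have [z zp] := prim_exists.
set N := #|F|.-1 in zp.
have NE : N = (q ^ (2 * n) - 1)%N by rewrite /N cardF; lia.
have N0 : (0 < N)%N by rewrite /N; have := cardF_gt1; case: #|F| => [|[]].
have qm0 : (0 < q ^ m - 1)%N.
  case: (posnP (q ^ m - 1)) => // h; move: Hd; rewrite h dvd0n -NE => /eqP N00.
  by move: N0; rewrite N00.
set K := (N %/ (q ^ m - 1))%N.
have KN : (K * (q ^ m - 1) = N)%N by rewrite /K divnK // NE.
have K0 : (0 < K)%N by move: N0; rewrite -KN muln_gt0 => /andP[].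
have zN : z ^+ N = 1 by apply: prim_expr_order.
have z0 : z != 0 by apply/eqP=> z0; move: zN; rewrite z0 expr0n gtn_eqF // => /eqP; rewrite eq_sym oner_eq0.
pose g (i : 'I_(q ^ m)) : F := if val i == 0%N then 0 else z ^+ (K * (val i).-1).
have ginj : injective g.
  move=> i j; rewrite /g.
  have [i0|i0] := eqVneq (val i) 0%N; have [j0|j0] := eqVneq (val j) 0%N.
  - by move=> _; apply: val_inj; rewrite i0 j0.
  - by move=> /esym /eqP; rewrite expf_eq0 (negPf z0) andbF.
  - by move=> /eqP; rewrite expf_eq0 (negPf z0) andbF.
  move=> /eqP; rewrite (eq_prim_root_expr zp).
  have lt u : (u < q ^ m)%N -> (K * u.-1 < N)%N.
    by move=> uq; rewrite -KN ltn_pmul2l //; lia.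
  rewrite !modn_small ?lt ?ltn_ord // eqn_pmul2l // => /eqP h.
  by apply: val_inj; move: h i0 j0; lia.
rewrite -{1}(card_ord (q ^ m)) -(card_imset _ ginj).
apply: subset_leq_card; apply/subsetP=> w /imsetP[i _ ->]; rewrite inE /g.
case: ifP => _; first by rewrite expr0n expn_eq0; have := q2; case: q => [|[]].
set w' := z ^+ _.
have -> : (q ^ m = (q ^ m - 1) + 1)%N by lia.
rewrite {}/w' exprD expr1 -exprM mulnAC KN exprM mulnC exprM zN expr1n mul1r //.
Qed.

Lemma exists_lam : exists l : F, l ^+ (q ^ 2) = l /\ l ^+ q != l.
Proof.
have H2 := @sub_count 2.
have Hd : (q ^ 2 - 1 %| q ^ (2 * n) - 1)%N.
  by rewrite expnM; apply: dvd_sub1; rewrite expn_gt0; have := q2; case: q.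
have {H2 Hd} H2 := H2 Hd.
have H1 := @card_fix_le F q q2.
have : ~~ ([set x : F | x ^+ (q ^ 2) == x] \subset [set x : F | x ^+ q == x]).
  apply/negP=> /subset_leq_card h.
  have := leq_trans H2 (leq_trans h H1).
  rewrite -{2}(expn1 q) leq_exp2l ?q2 //.
case/subsetPn=> l; rewrite !inE => /eqP h1 h2; by exists l.
Qed.

Lemma pair_zero A B (c1 c2 : F) : ~~ odd A -> odd B ->
  (forall b : F, trace2 q n (c1 * b ^+ (q ^ A)) + trace2 q n (c2 * b ^+ (q ^ B)) = 0) ->
  c1 = 0 /\ c2 = 0.
Proof.
move=> eA oB H.
have [l [l2 lq]] := exists_lam.
have lA : l ^+ (q ^ A) = l.
  by rewrite -(odd_double_half A) (negPf eA) add0n -mul2n fix_iter.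
have lB : l ^+ (q ^ B) = l ^+ q.
  rewrite -(odd_double_half B) oB add1n expnS mulnC exprM -mul2n fix_iter //.
have lq2 : (l ^+ q) ^+ (q ^ 2) = l ^+ q by rewrite -exprM mulnC exprM l2.
have X0 : forall b, trace2 q n (c1 * b ^+ (q ^ A)) = 0.
  move=> b; have h1 := H b; have h2 := H (l * b).
  rewrite !frM lA lB (mulrC l) (mulrC (l ^+ q)) !mulrA (mulrC _ l) (mulrC _ (l ^+ q)) in h2.
  rewrite (@trZ l _ l2) (@trZ (l ^+ q) _ lq2) in h2.
  have : (l - l ^+ q) * trace2 q n (c1 * b ^+ (q ^ A)) = 0.
    set X := trace2 q n (c1 * _) in h1 h2 *; set Y := trace2 q n (c2 * _) in h1 h2 *.
    transitivity (l * X + l ^+ q * Y - l ^+ q * (X + Y)); first by ring.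
    by rewrite h2 h1 mulr0 subr0.
  move/eqP; rewrite mulf_eq0 subr_eq0 eq_sym (negPf lq) /= => /eqP //.
split; first exact: tr_zero X0.
apply: (@tr_zero B) => b; have := H b; by rewrite X0 add0r.
Qed.

Lemma mod_inj_mul m s u u' : coprime m s -> (u < m)%N -> (u' < m)%N ->
  (s * u == s * u' %[mod m])%N -> u = u'.
Proof.
move=> co um um'.
wlog le : u u' um um' / (u' <= u)%N.
  move=> W h; case: (leqP u' u) => l; first exact: W.
  by apply/esym/W => //; [apply: ltnW | rewrite eq_sym].
rewrite eqn_mod_dvd ?leq_mul2l ?le ?orbT // -mulnBr Gauss_dvdr //.
move=> dv; case: (posnP (u - u')) => p; first by move: p le; lia.
have := dvdn_leq p dv; lia.
Qed.

Lemma b0_zero E (c : F) : odd n ->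
  (forall y : F, y ^+ (q ^ n) = y -> trace2 q n (c * y ^+ (q ^ E)) = 0) -> c = 0.
Proof.
move=> on H; apply/eqP; apply/negP => c0.
pose h (i : 'I_n) : 'I_n := Ordinal (ltn_pmod (E + 2 * i) n0).
have hinj : injective h.
  move=> i j /(congr1 val) /= /eqP; rewrite eqn_modDl => /(mod_inj_mul _ (ltn_ord i) (ltn_ord j)).
  by move=> H'; apply: val_inj; apply: H'; rewrite coprimen2.
pose pi := perm hinj.
pose o0 := Ordinal n0.
pose a (j : nat) : F := c ^+ (q ^ (2 * val ((pi^-1)%g (insubd o0 j)))).
pose sig := fun y : F => y ^+ (q ^ 1).
have q11 : (1 < q ^ 1)%N by rewrite expn1 q2.
have RB := @root_bound F sig (fun x y => frD 1 x y) (fun x y => frM 1 x y) (fr1 1)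
   (q ^ 1) (card_fix_le _ q11) n.-1 a.
have nz : exists2 t, (t < n.-1.+1)%N & a t != 0.
  exists (val (pi o0)); first by rewrite prednK ?ltn_ord.
  by rewrite /a valKd permK /= muln0 expn0 expr1; apply/negP.
have {RB nz} RB := RB nz.
have Hd : (q ^ n - 1 %| q ^ (2 * n) - 1)%N.
  by rewrite mulnC expnM; apply: dvd_sub1; rewrite expn_gt0; have := q2; case: q.
have SC := sub_count Hd.
have : (#|[set x : F | x ^+ (q ^ n) == x]| <= #|[set x | P sig n.-1.+1 a x == 0%R]|)%N.
  apply: subset_leq_card; apply/subsetP=> y; rewrite !inE => /eqP yK.
  have ymod k : y ^+ (q ^ k) = y ^+ (q ^ (k %% n)).
    by rewrite {1}(divn_eq k n) -frfr mulnC (fix_iter _ yK).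
  rewrite -(H y yK) /trace2 /P prednK //.
  rewrite (reindex_inj (@perm_inj _ pi)) /=; apply/eqP; apply: eq_bigr => i _.
  rewrite /a valKd permK /sig iter_fr mul1n frM frfr permE /= -ymod.
  by rewrite addnC.
move=> h2; have := leq_trans SC (leq_trans h2 RB).
by rewrite expn1 leq_exp2l ?q2 //; move: n0; clear; lia.
Qed.

Lemma fix_gcd s (x : F) : (0 < s)%N -> coprime s n ->
  x ^+ (q ^ (2 * s)) = x -> x ^+ (q ^ 2) = x.
Proof.
move=> s0 co hx.
case/(coprimeP _ s0): co => [[u1 u2]] /= e.
have h1 := fix_iter u1 hx.
have e2 : (2 * s * u1 = 2 * n * u2 + 2)%N.
  have : (u2 * n < u1 * s)%N by lia.
  move: e; clear; nia.
by rewrite e2 -frfr fix_iter ?fr2n in h1.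
Qed.

Lemma lev_sub (f : lpoly F n) x y : lev q f (x - y) = lev q f x - lev q f y.
Proof. by rewrite /lev -sumrB; apply: eq_bigr => i _; rewrite frB mulrBr. Qed.

Lemma rank_bound s t0 D (f : lpoly F n) r :
  (0 < s)%N -> coprime s n -> (D <= n)%N ->
  (forall u, (D <= u < n)%N -> forall i : 'I_n, val i = ((s * (t0 + u)) %% n)%N -> f i = 0) ->
  f != 0 -> has_rank q f r -> (n - D < r)%N.
Proof.
move=> s0 co Dn Hz fn0 [v [vS [vfree vspan]]].
pose hn (u : nat) : 'I_n := Ordinal (ltn_pmod (s * (t0 + u)) n0).
have hinj : injective (fun u : 'I_n => hn u).
  move=> u u' /(congr1 val) /= /eqP; rewrite !mulnDr eqn_modDl.
  move=> /(mod_inj_mul _ (ltn_ord u) (ltn_ord u')) H'; apply: val_inj; apply: H'.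
  by rewrite coprime_sym.
pose a (u : nat) : F := f (hn u).
have [D' DE] : exists D', D = D'.+1.
  case: D Hz Dn => [|D'] Hz Dn; last by exists D'.
  exfalso; move/negP: fn0; apply; apply/eqP/ffunP => i.
  have [g gK Kg] := injF_bij hinj.
  rewrite ffunE; apply: (Hz (g i)); first by rewrite ltn_ord.
  by rewrite -[in LHS](Kg i).
have [g gK Kg] := injF_bij hinj.
have nz : exists2 t, (t < D'.+1)%N & a t != 0.
  have [i fi] : exists i, f i != 0.
    apply/existsP; apply: contraR fn0 => /existsPn H; apply/eqP/ffunP=> i.
    by rewrite ffunE; apply/eqP; rewrite -[_ == _]negbK H.
  have ai : a (g i) = f i by rewrite /a -[in RHS](Kg i).
  exists (val (g i)); last by rewrite ai.
  case: (ltnP (g i) D'.+1) => // h; exfalso; move/negP: fi; apply; apply/eqP.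
  by apply: (Hz (g i)); [rewrite DE h ltn_ord | rewrite -[in LHS](Kg i)].
pose sig := fun y : F => y ^+ (q ^ (2 * s)).
have q21 : (1 < q ^ 2)%N by rewrite -(expn0 q) ltn_exp2l ?q2.
have fixb : (#|[set x | sig x == x]| <= q ^ 2)%N.
  apply: leq_trans (card_fix_le _ q21); apply: subset_leq_card; apply/subsetP=> x.
  by rewrite !inE => /eqP h; apply/eqP; apply: (fix_gcd s0 co h).
have RB := @root_bound F sig (fun x y => frD _ x y) (fun x y => frM _ x y) (fr1 _)
   (q ^ 2) fixb D' a nz.
pose tau := fun x : F => x ^+ (q ^ (2 * s * t0)).
have levE : forall x, lev q f x = P sig D'.+1 a (tau x).
  move=> x; rewrite /lev (reindex_inj hinj) /=.
  have -> : \sum_(u < n) f (hn u) * x ^+ (q ^ (2 * hn u)) =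
      \sum_(0 <= u < n) f (hn u) * x ^+ (q ^ (2 * ((s * (t0 + u)) %% n))).
    by rewrite big_mkord.
  rewrite (big_cat_nat _ (n := D)) //= [X in _ + X]big_nat_cond [X in _ + X]big1; last first.
    by move=> u /andP[/andP[h1 h2] _]; rewrite (Hz u) ?h1 ?h2 // mul0r.
  rewrite addr0 DE big_mkord /P; apply: eq_bigr => u _.
  by rewrite /a /tau /sig iter_fr frfr -frmod; congr (_ * _ ^+ (q ^ _)); ring.
have kerb : (#|[set x | lev q f x == 0%R]| <= (q ^ 2) ^ D')%N.
  apply: leq_trans RB.
  rewrite -(card_imset _ (@fr_inj (2 * s * t0))).
  apply: subset_leq_card; apply/subsetP=> w /imsetP[x]; rewrite !inE levE => h ->.
  exact: h.
have imb : (#|limage q f| <= (q ^ 2) ^ r)%N.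
  pose Fq2 := [set x : F | x ^+ (q ^ 2) == x].
  apply: (@leq_trans #|[set (\sum_(i < r) lam i * v i) | lam : {ffun 'I_r -> F} in ffun_on Fq2]|).
    apply: subset_leq_card; apply/subsetP=> y yS.
    have [lam [lamF ->]] := vspan y yS.
    apply/imsetP; exists [ffun i => lam i].
      by apply/ffun_onP=> i; rewrite ffunE inE; apply/eqP; apply: lamF.
    by apply: eq_bigr => i _; rewrite ffunE.
  apply: leq_trans (leq_imset_card _ _) _.
  rewrite card_ffun_on card_ord.
  have := card_fix_le _ q21; case: (posnP r) => [->|rp] h; first by rewrite !expn0.
  by rewrite leq_exp2r.
have tot : (q ^ (2 * n) <= (q ^ 2) ^ D' * (q ^ 2) ^ r)%N.
  apply: leq_trans (leq_mul kerb imb).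
  have := @card_preim F (lev q f) (limage q f) (lev_sub f).
  have -> : [set x | lev q f x \in limage q f] = [set: F].
    by apply/setP=> x; rewrite !inE /limage; apply/imsetP; exists x.
  by rewrite card_setT_F.
rewrite ltnNge; apply/negP => rle.
move: tot; rewrite -expnD -expnM leq_exp2l ?q2 //.
by move: rle Dn DE n0; clear; lia.
Qed.


Lemma sum_nat_single (G : nat -> lpoly F n) lo hi j : (lo <= j < hi)%N ->
  (forall j', j' != j -> G j' = 0) -> \sum_(lo <= j' < hi) G j' = G j.
Proof.
move=> /andP[l h] H.
rewrite (big_cat_nat _ (n := j)) //=; last exact: ltnW.
rewrite [X in _ + X]big_ltn // [X in X + _]big_nat_cond [X in X + _]big1; last first.
  by move=> u /andP[/andP[_ uj] _]; apply: H; rewrite neq_ltn uj.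
rewrite add0r big_nat_cond big1 ?addr0 //.
by move=> u /andP[/andP[ju _] _]; apply: H; rewrite neq_ltn ju orbT.
Qed.

Lemma lterm0 e : lterm n (0 : F) e = 0.
Proof. by apply/ffunP=> i; rewrite !ffunE; case: ifP. Qed.

Lemma sum_lterm (f : lpoly F n) (al : F) e :
  \sum_(i < n) f i * lterm n al e i = f (Ordinal (ltn_pmod (e %/ 2) n0)) * al.
Proof.
rewrite (bigD1 (Ordinal (ltn_pmod (e %/ 2) n0))) //= ffunE eqxx big1 ?addr0 //.
by move=> i ne; rewrite ffunE ifN ?mulr0 //.
Qed.

Lemma bpair_two (f : lpoly F n) al be e1 e2 :
  bpair q f (lterm n al e1 + lterm n be e2) =
  trace2 q n (f (Ordinal (ltn_pmod (e1 %/ 2) n0)) * al) +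
  trace2 q n (f (Ordinal (ltn_pmod (e2 %/ 2) n0)) * be).
Proof.
rewrite /bpair -trD -!sum_lterm -big_split /=; congr trace2.
by apply: eq_bigr => i _; rewrite ffunE mulrDr.
Qed.

Lemma half2 m : ((2 * m) %/ 2 = m)%N.
Proof. by rewrite mulKn. Qed.

Lemma H_zero d s (f : lpoly F n) : dual q (@Hcode F q n d s) f -> odd s ->
  forall j, (1 <= j <= (n - d + 1) %/ 2)%N -> forall i : 'I_n,
  (val i = ((s * (n - j + 1)) %% n)%N \/ val i = ((s * j) %% n)%N) -> f i = 0.
Proof.
move=> [_ Hd] os j jr.
have key : forall be : F,
    trace2 q n (f (Ordinal (ltn_pmod ((2 * s * (n - j + 1)) %/ 2) n0)) * be ^+ (q ^ (2 * s * (n - j + 1)))) +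
    trace2 q n (f (Ordinal (ltn_pmod ((2 * s * j) %/ 2) n0)) * be ^+ (q ^ s)) = 0.
  move=> be; rewrite -bpair_two; apply: Hd.
  exists (fun j' => if j' == j then be else 0).
  rewrite (sum_nat_single _ (j := j)) ?eqxx //.
  by move=> jj /negPf ->; rewrite !fr0 !lterm0 addr0.
have eA : ~~ odd (2 * s * (n - j + 1)) by rewrite !oddM.
have [h1 h2] := pair_zero eA os key.
move=> i [] vi.
  have -> : i = Ordinal (ltn_pmod ((2 * s * (n - j + 1)) %/ 2) n0).
    by apply: val_inj; rewrite /= -mulnA half2.
  exact: h1.
have -> : i = Ordinal (ltn_pmod ((2 * s * j) %/ 2) n0).
  by apply: val_inj; rewrite /= -mulnA half2.
exact: h2.
Qed.

Lemma tr0 : trace2 q n (0 : F) = 0.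
Proof. by rewrite /trace2 big1 // => i _; rewrite fr0. Qed.

Lemma bpair_one (f : lpoly F n) al e :
  bpair q f (lterm n al e) = trace2 q n (f (Ordinal (ltn_pmod (e %/ 2) n0)) * al).
Proof.
by have := bpair_two f al 0 e e; rewrite lterm0 addr0 mulr0 tr0 addr0.
Qed.

Lemma E_zero d s (f : lpoly F n) : dual q (@Ecode F q n d s) f -> odd s -> odd n ->
  (forall i : 'I_n, val i = (((s * (n + 1)) %/ 2) %% n)%N -> f i = 0) /\
  (forall j, (1 <= j <= (n - d) %/ 2)%N -> forall i : 'I_n,
   (val i = (((s * (n + 2 * j + 1)) %/ 2) %% n)%N \/
    val i = (((s * (n - 2 * j + 1)) %/ 2) %% n)%N) -> f i = 0).
Proof.
move=> [_ Hd] os on; split.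
  move=> i vi.
  have -> : i = Ordinal (ltn_pmod ((s * (n + 1)) %/ 2) n0) by apply: val_inj.
  apply: (@b0_zero (s * (n + 1))) => // y yK.
  rewrite -bpair_one; apply: Hd.
  exists y, (fun _ => 0); split => //.
  rewrite big1 ?addr0 // => j _.
  by rewrite !fr0 !lterm0 addr0.
move=> j jr.
have key : forall be : F,
    trace2 q n (f (Ordinal (ltn_pmod ((s * (n + 2 * j + 1)) %/ 2) n0)) * be ^+ (q ^ (s * (n + 2 * j + 1)))) +
    trace2 q n (f (Ordinal (ltn_pmod ((s * (n - 2 * j + 1)) %/ 2) n0)) * be ^+ (q ^ s)) = 0.
  move=> be; rewrite -bpair_two; apply: Hd.
  exists 0, (fun j' => if j' == j then be else 0); split; first exact: fr0.
  rewrite fr0 lterm0 add0r.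
  rewrite (sum_nat_single _ (j := j)) ?eqxx //.
  by move=> jj /negPf ->; rewrite !fr0 !lterm0 addr0.
have eA : ~~ odd (s * (n + 2 * j + 1))%N.
  by rewrite oddM !oddD on /=; case: (odd j); rewrite andbF.
have [h1 h2] := pair_zero eA os key.
move=> i [] vi.
  have -> : i = Ordinal (ltn_pmod ((s * (n + 2 * j + 1)) %/ 2) n0) by apply: val_inj.
  exact: h1.
have -> : i = Ordinal (ltn_pmod ((s * (n - 2 * j + 1)) %/ 2) n0) by apply: val_inj.
exact: h2.
Qed.

End Field.


Theorem theorem5p3 (q n s d : nat) (F : finFieldType) :
  prime_power q -> (2 <= n)%N -> odd s -> coprime s n ->
  #|F| = (q ^ (2 * n))%N ->
  ((odd n != odd d) -> (1 <= d <= n - 1)%N ->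
     t_design (F := F) q (@Hcode F q n d s) (n - d + 1)) /\
  (odd n -> odd d -> (1 <= d <= n - 1)%N ->
     t_design (F := F) q (@Ecode F q n d s) (n - d + 1)).
Proof.
move=> qpp n2 os co cardF.
have n0 : (0 < n)%N by apply: leq_trans n2.
have s0 : (0 < s)%N by case: s os co.
split.
  move=> par dr f fd fn0 r hr /andP[r1 rle].
  set k := ((n - d + 1) %/ 2)%N.
  have k2 : (2 * k = n - d + 1)%N.
    have := odd_double_half (n - d + 1).
    have -> : odd (n - d + 1) = false.
      rewrite oddD oddB; last by move: dr; clear; lia.
      by move: par; case: (odd n); case: (odd d).
    by rewrite /k divn2 -mul2n.
  have Hz : forall u, (d - 1 <= u < n)%N -> forall i : 'I_n,
      val i = ((s * (k + 1 + u)) %% n)%N -> f i = 0.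
    move=> u /andP[u1 u2] i vi.
    case: (leqP (k + 1 + u) n) => h.
      apply: (H_zero qpp n0 cardF fd os (j := (n - k - u)%N)).
        by apply/andP; split; rewrite -/k; move: h u1 k2 dr; clear; lia.
      left; rewrite vi; congr (_ %% _)%N; congr (_ * _)%N.
      by move: h; clear; lia.
    apply: (H_zero qpp n0 cardF fd os (j := (k + 1 + u - n)%N)).
      by apply/andP; split; rewrite -/k; move: h u2 k2 dr; clear; lia.
    right; rewrite vi.
    have -> : (s * (k + 1 + u) = s * n + s * (k + 1 + u - n))%N.
      by rewrite -mulnDr; congr (_ * _)%N; move: h; clear; lia.
    by rewrite modnMDl.
  have := rank_bound qpp n0 cardF s0 co (t0 := (k + 1)%N) (D := (d - 1)%N) _ Hz fn0 hr.
  have -> : (d - 1 <= n)%N by move: dr; clear; lia.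
  by move=> /(_ isT); move: rle dr; clear; lia.
move=> on od dr f fd fn0 r hr /andP[r1 rle].
set k := ((n - d) %/ 2)%N.
have k2 : (2 * k = n - d)%N.
  have := odd_double_half (n - d).
  have -> : odd (n - d) = false.
    rewrite oddB; last by move: dr; clear; lia.
    by rewrite on od.
  by rewrite /k divn2 -mul2n add0n.
set m := ((n + 1) %/ 2)%N.
have m2 : (2 * m = n + 1)%N.
  have := odd_double_half (n + 1).
  have -> : odd (n + 1) = false by rewrite oddD on.
  by rewrite /m divn2 -mul2n add0n.
have [E0 Ej] := E_zero qpp n0 cardF fd os on.
have Hz : forall u, (d - 1 <= u < n)%N -> forall i : 'I_n,
    val i = ((s * (m + k + 1 + u)) %% n)%N -> f i = 0.
  move=> u /andP[u1 u2] i vi.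
  set w := (m + k + 1 + u - n)%N.
  have vw : val i = ((s * w) %% n)%N.
    rewrite vi.
    have -> : (s * (m + k + 1 + u) = s * n + s * w)%N.
      by rewrite -mulnDr; congr (_ * _)%N; rewrite /w; move: u1 k2 m2 dr; clear; lia.
    by rewrite modnMDl.
  case: (ltngtP w m) => hw.
  - apply: (Ej (m - w)%N).
      by apply/andP; split; rewrite -/k; move: hw u1 k2 m2 dr; rewrite /w; clear; lia.
    right; rewrite vw.
    have -> : (n - 2 * (m - w) + 1 = 2 * w)%N by move: hw u1 k2 m2 dr; rewrite /w; clear; lia.
    by rewrite mulnCA half2.
  - apply: (Ej (w - m)%N).
      by apply/andP; split; rewrite -/k; move: hw u2 k2 m2 dr; rewrite /w; clear; lia.
    left; rewrite vw.
    have -> : (n + 2 * (w - m) + 1 = 2 * w)%N by move: hw u1 k2 m2 dr; rewrite /w; clear; lia.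
    by rewrite mulnCA half2.
  - apply: E0; rewrite vw hw -m2 mulnCA half2 //.
have := rank_bound qpp n0 cardF s0 co (t0 := (m + k + 1)%N) (D := (d - 1)%N) _ Hz fn0 hr.
have -> : (d - 1 <= n)%N by move: dr; clear; lia.
by move=> /(_ isT); move: rle dr; clear; lia.
Qed.
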